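(* Let $A\in\mathbb{R}^{n\times n}$, $B\in\mathbb{R}^{n\times m}$, $0\le\gamma\le1$. Let $(D^*,E^*,d^* )$ be true cost parameters and $(D^\dagger,E^\dagger,d^\dagger)$ falsified cost parameters ($D$'s symmetric positive semidefinite, $E$'s symmetric positive definite, $d$'s in $\mathbb{R}^n$). For each of the two parameter sets, let $P$ be the positive definite solution of $P=D+\gamma A'PA-\gamma^2A'PB(E+\gamma B'PB)^{-1}B'PA$, $K=-\gamma(E+\gamma B'PB)^{-1}B'PA$, $h$ the solution of $h=d+\gamma(A+BK)'h$, and $$k=-\tfrac{\gamma}{2}(E+\gamma B'PB)^{-1}B'h;$$ denote these by $P^*,K^*,h^*,k^*$ for the true parameters and $P^\dagger,K^\dagger,h^\dagger,k^\dagger$ for the falsified ones. Suppose $\|E^\dagger-E^*\|\le\lambda_{\min}(E^* )/2$. Then $$\|k^\dagger-k^*\|\le\Gamma_7\|E^\dagger-E^*\|+\Gamma_8\|P^\dagger-P^*\|+\Gamma_9\|h^\dagger-h^*\|,$$ where $\Gamma_7=\frac{4}{\lambda_{\min}(E^* )}\|k^*\|$, $\Gamma_8=\frac{4\gamma}{\lambda_{\min}(E^* )}\|k^*\|\,\|B\|^2$, and $\Gamma_9=\frac{4\gamma}{\lambda_{\min}(E^* )}\|B\|$.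
   Context: Prime denotes transpose; $\|\cdot\|$ is the Euclidean norm for vectors and spectral norm for matrices; $\lambda_{\min}$ is the smallest eigenvalue. $(K,k)$ characterizes the optimal affine policy $u=Kx+k$ of the discounted LQG problem with dynamics $x_{t+1}=Ax_t+Bu_t+Cw_t$ and stage cost $x'Dx+d'x+r+u'Eu$. *)

(* Defs.v *)
From HB Require Import structures.
From mathcomp Require Import all_boot all_order all_algebra.
From mathcomp Require Import boolp classical_sets reals.
Set Implicit Arguments. Unset Strict Implicit. Unset Printing Implicit Defensive.
Import Order.TTheory GRing.Theory Num.Theory.
Local Open Scope ring_scope.
Local Open Scope classical_set_scope.

Section Defs.
Variable R : realType.

Definition vnorm (p : nat) (v : 'cV[R]_p) : R :=
  Num.sqrt (\sum_(i < p) v i 0 ^+ 2).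

Definition snorm (p q : nat) (M : 'M[R]_(p, q)) : R :=
  sup [set vnorm (M *m x) | x in [set x : 'cV[R]_q | vnorm x = 1]].

Definition lambda_min (p : nat) (M : 'M[R]_p) : R :=
  inf [set l : R | exists2 v : 'cV[R]_p, v != 0 & M *m v = l *: v].

Definition sym_psd (p : nat) (M : 'M[R]_p) : Prop :=
  M^T = M /\ forall x : 'cV[R]_p, 0 <= (x^T *m M *m x) 0 0.

Definition sym_pd (p : nat) (M : 'M[R]_p) : Prop :=
  M^T = M /\ forall x : 'cV[R]_p, x != 0 -> 0 < (x^T *m M *m x) 0 0.

Variables (n m : nat) (A : 'M[R]_n) (B : 'M[R]_(n, m)) (gamma : R).

Definition Gmat (E : 'M[R]_m) (P : 'M[R]_n) : 'M[R]_m :=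
  E + gamma *: (B^T *m P *m B).

Definition riccati (D : 'M[R]_n) (E : 'M[R]_m) (P : 'M[R]_n) : Prop :=
  P = D + gamma *: (A^T *m P *m A)
        - gamma ^+ 2 *: (A^T *m P *m B *m invmx (Gmat E P) *m B^T *m P *m A).

Definition gainK (E : 'M[R]_m) (P : 'M[R]_n) : 'M[R]_(m, n) :=
  - (gamma *: (invmx (Gmat E P) *m B^T *m P *m A)).

Definition h_eq (E : 'M[R]_m) (P : 'M[R]_n) (d h : 'cV[R]_n) : Prop :=
  h = d + gamma *: ((A + B *m gainK E P)^T *m h).

Definition offset_k (E : 'M[R]_m) (P : 'M[R]_n) (h : 'cV[R]_n) : 'cV[R]_m :=
  - ((gamma / 2) *: (invmx (Gmat E P) *m B^T *m h)).

End Defs.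

(* Main.v *)
Require Import Defs.
From HB Require Import structures.
From mathcomp Require Import all_boot all_order all_algebra.
From mathcomp Require Import boolp classical_sets reals.
From mathcomp Require Import ring lra.
Import Order.TTheory GRing.Theory Num.Theory.
Local Open Scope ring_scope.
Local Open Scope classical_set_scope.

Definition dot {R : realType} {p : nat} (u v : 'cV[R]_p) : R := \sum_i u i 0 * v i 0.

Lemma dotE {R : realType} {p : nat} (u v : 'cV[R]_p) : dot u v = (u^T *m v) 0 0.
Proof. by rewrite /dot !mxE; apply: eq_bigr => i _; rewrite mxE. Qed.

Lemma dotC {R : realType} {p : nat} (u v : 'cV[R]_p) : dot u v = dot v u.
Proof. by apply: eq_bigr => i _; rewrite mulrC. Qed.

Lemma dotDl {R : realType} {p : nat} (u v w : 'cV[R]_p) : dot (u + v) w = dot u w + dot v w.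
Proof. by rewrite /dot -big_split; apply: eq_bigr => i _; rewrite mxE mulrDl. Qed.

Lemma dotDr {R : realType} {p : nat} (u v w : 'cV[R]_p) : dot w (u + v) = dot w u + dot w v.
Proof. by rewrite dotC dotDl !(dotC w). Qed.

Lemma dotZl {R : realType} {p : nat} a (u w : 'cV[R]_p) : dot (a *: u) w = a * dot u w.
Proof. by rewrite /dot mulr_sumr; apply: eq_bigr => i _; rewrite mxE mulrA. Qed.

Lemma dotZr {R : realType} {p : nat} a (u w : 'cV[R]_p) : dot w (a *: u) = a * dot w u.
Proof. by rewrite dotC dotZl dotC. Qed.

Lemma dotNl {R : realType} {p : nat} (u w : 'cV[R]_p) : dot (- u) w = - dot u w.
Proof. by rewrite -scaleN1r dotZl mulN1r. Qed.

Lemma dotNr {R : realType} {p : nat} (u w : 'cV[R]_p) : dot w (- u) = - dot w u.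
Proof. by rewrite dotC dotNl dotC. Qed.

Lemma dot0r {R : realType} {p : nat} (u : 'cV[R]_p) : dot u 0 = 0.
Proof. by rewrite /dot big1 // => i _; rewrite mxE mulr0. Qed.

Lemma dotxx_ge0 {R : realType} {p : nat} (u : 'cV[R]_p) : 0 <= dot u u.
Proof. by apply: sumr_ge0 => i _; rewrite -expr2 sqr_ge0. Qed.

Lemma dotxx_eq0 {R : realType} {p : nat} (u : 'cV[R]_p) : dot u u = 0 -> u = 0.
Proof.
move=> h; apply/matrixP => i j; rewrite (ord1 j) mxE.
have NN : forall k, xpredT k -> 0 <= u k 0 * u k 0 by move=> k _; rewrite -expr2 sqr_ge0.
have := @psumr_eq0P _ _ xpredT (fun i => u i 0 * u i 0) NN h i isT.
by move=> /eqP; rewrite mulf_eq0 orbb => /eqP.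
Qed.

Lemma CS_sum {R : realType} {p : nat} (f g : 'I_p -> R) :
  (\sum_i f i * g i) ^+ 2 <= (\sum_i f i ^+ 2) * (\sum_i g i ^+ 2).
Proof.
set a := \sum_i f i ^+ 2; set b := \sum_i f i * g i; set c := \sum_i g i ^+ 2.
have c0 : 0 <= c by apply: sumr_ge0 => i _; apply: sqr_ge0.
have a0 : 0 <= a by apply: sumr_ge0 => i _; apply: sqr_ge0.
have [cz|cpos] := eqVneq c 0.
  have g0 : forall i, g i = 0.
    have NN : forall k, xpredT k -> 0 <= g k ^+ 2 by move=> k _; apply: sqr_ge0.
    move=> i; have := @psumr_eq0P _ _ xpredT (fun i => g i ^+ 2) NN cz i isT.
    by move=> /eqP; rewrite sqrf_eq0 => /eqP.
  have -> : b = 0 by rewrite /b big1 // => i _; rewrite g0 mulr0.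
  by rewrite cz expr0n /= mulr0.
have cp : 0 < c by rewrite lt_def cpos c0.
have H : 0 <= \sum_i (c * f i - b * g i) ^+ 2 by apply: sumr_ge0 => i _; apply: sqr_ge0.
have E : \sum_i (c * f i - b * g i) ^+ 2 = c ^+ 2 * a - 2 * c * b * b + b ^+ 2 * c.
  transitivity (\sum_i (c ^+ 2 * f i ^+ 2 - (2 * c * b) * (f i * g i) + b ^+ 2 * g i ^+ 2)).
    by apply: eq_bigr => i _; ring.
  rewrite big_split /= sumrB -!mulr_sumr -/a -/b -/c; ring.
rewrite E in H; nra.
Qed.

Lemma CS_dot {R : realType} {p : nat} (u v : 'cV[R]_p) : dot u v ^+ 2 <= dot u u * dot v v.
Proof.
have := CS_sum (fun i => u i 0) (fun i => v i 0).
have E1 : dot u u = \sum_i u i 0 ^+ 2 by apply: eq_bigr => i _; rewrite expr2.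
have E2 : dot v v = \sum_i v i 0 ^+ 2 by apply: eq_bigr => i _; rewrite expr2.
by rewrite E1 E2.
Qed.

Lemma vnormE {R : realType} {p : nat} (u : 'cV[R]_p) : vnorm u = Num.sqrt (dot u u).
Proof. by rewrite /vnorm /dot; congr Num.sqrt; apply: eq_bigr => i _; rewrite expr2. Qed.

Lemma vnorm_ge0 {R : realType} {p : nat} (u : 'cV[R]_p) : 0 <= vnorm u.
Proof. by rewrite vnormE sqrtr_ge0. Qed.

Lemma vnorm_sq {R : realType} {p : nat} (u : 'cV[R]_p) : vnorm u ^+ 2 = dot u u.
Proof. by rewrite vnormE sqr_sqrtr // dotxx_ge0. Qed.

Lemma CS_abs {R : realType} {p : nat} (u v : 'cV[R]_p) : `|dot u v| <= vnorm u * vnorm v.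
Proof.
rewrite !vnormE -sqrtrM ?dotxx_ge0 // -sqrtr_sqr ler_sqrt; last first.
  by apply: mulr_ge0; apply: dotxx_ge0.
exact: CS_dot.
Qed.

Lemma CS_le {R : realType} {p : nat} (u v : 'cV[R]_p) : dot u v <= vnorm u * vnorm v.
Proof. exact: le_trans (ler_norm _) (CS_abs u v). Qed.

Lemma vnormZ {R : realType} {p : nat} a (u : 'cV[R]_p) : vnorm (a *: u) = `|a| * vnorm u.
Proof.
rewrite !vnormE dotZl dotZr mulrA -expr2 sqrtrM ?sqr_ge0 // sqrtr_sqr //.
Qed.

Lemma vnormN {R : realType} {p : nat} (u : 'cV[R]_p) : vnorm (- u) = vnorm u.
Proof. by rewrite -scaleN1r vnormZ normrN normr1 mul1r. Qed.

Lemma vnormD {R : realType} {p : nat} (u v : 'cV[R]_p) : vnorm (u + v) <= vnorm u + vnorm v.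
Proof.
rewrite -(ler_pXn2r (n := 2)) ?nnegrE ?addr_ge0 ?vnorm_ge0 //.
rewrite vnorm_sq dotDl !dotDr sqrrD !vnorm_sq (dotC v u).
have := CS_le u v; lra.
Qed.

Lemma vnorm_eq0 {R : realType} {p : nat} (u : 'cV[R]_p) : vnorm u = 0 -> u = 0.
Proof. by move=> h; apply: dotxx_eq0; rewrite -vnorm_sq h expr0n. Qed.

Lemma vnorm0 {R : realType} {p : nat} : vnorm (0 : 'cV[R]_p) = 0.
Proof. by rewrite vnormE dot0r sqrtr0. Qed.

Lemma mx_bound {R : realType} {p q : nat} (M : 'M[R]_(p, q)) (x : 'cV[R]_q) :
  vnorm (M *m x) <= Num.sqrt (\sum_i \sum_j M i j ^+ 2) * vnorm x.
Proof.
have F0 : 0 <= \sum_i \sum_j M i j ^+ 2.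
  by apply: sumr_ge0 => i _; apply: sumr_ge0 => j _; apply: sqr_ge0.
rewrite vnormE [vnorm x]vnormE -sqrtrM // ler_sqrt; last by apply: mulr_ge0 => //; apply: dotxx_ge0.
rewrite /dot mulr_suml; apply: ler_sum => i _.
rewrite -expr2 mxE.
have -> : \sum_i0 x i0 0 * x i0 0 = \sum_j x j 0 ^+ 2 by apply: eq_bigr => j _; rewrite expr2.
exact: (CS_sum (fun j => M i j) (fun j => x j 0)).
Qed.

Lemma snorm_ub {R : realType} {p q : nat} (M : 'M[R]_(p, q)) :
  has_ubound [set vnorm (M *m x) | x in [set x : 'cV[R]_q | vnorm x = 1]].
Proof.
exists (Num.sqrt (\sum_i \sum_j M i j ^+ 2)) => y [x /= x1 <-].
by have := mx_bound M x; rewrite x1 mulr1.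
Qed.

Lemma snorm_le {R : realType} {p q : nat} (M : 'M[R]_(p, q)) (x : 'cV[R]_q) :
  vnorm (M *m x) <= snorm M * vnorm x.
Proof.
have [x0|xn0] := eqVneq (vnorm x) 0.
  by rewrite (vnorm_eq0 _ x0) mulmx0 !vnorm0 mulr0.
have xp : 0 < vnorm x by rewrite lt_def xn0 vnorm_ge0.
set u := (vnorm x)^-1 *: x.
have u1 : vnorm u = 1 by rewrite vnormZ ger0_norm ?invr_ge0 ?vnorm_ge0 // mulVf.
have : vnorm (M *m u) <= snorm M.
  apply: (ub_le_sup (snorm_ub M)); by exists u.
rewrite /u -scalemxAr vnormZ ger0_norm ?invr_ge0 ?vnorm_ge0 //.
by rewrite ler_pdivrMl // mulrC.
Qed.

Lemma snorm_ge0 {R : realType} {p q : nat} (M : 'M[R]_(p, q)) : 0 <= snorm M.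
Proof.
rewrite /snorm.
set S := [set vnorm (M *m x) | x in [set x : 'cV[R]_q | vnorm x = 1]].
have [->|/set0P [y [x x1 _]]] := eqVneq S set0; first by rewrite sup0.
apply: le_trans (vnorm_ge0 (M *m x)) _.
apply: (ub_le_sup (snorm_ub M)); by exists x.
Qed.

Definition quad {R : realType} {p : nat} (M : 'M[R]_p) (x : 'cV[R]_p) : R :=
  (x^T *m M *m x) 0 0.

Lemma quadE {R : realType} {p : nat} (M : 'M[R]_p) x : quad M x = dot x (M *m x).
Proof. by rewrite /quad dotE mulmxA. Qed.

Lemma dot_tr {R : realType} {p q : nat} (M : 'M[R]_(p, q)) x y :
  dot x (M *m y) = dot (M^T *m x) y.
Proof. by rewrite !dotE trmx_mul trmxK mulmxA. Qed.

Lemma quadZ {R : realType} {p : nat} (M : 'M[R]_p) a x :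
  quad M (a *: x) = a ^+ 2 * quad M x.
Proof. by rewrite !quadE -scalemxAr dotZl dotZr mulrA -expr2. Qed.

Lemma normalize {R : realType} {p : nat} (x : 'cV[R]_p) :
  vnorm x != 0 -> vnorm ((vnorm x)^-1 *: x) = 1.
Proof. by move=> h; rewrite vnormZ ger0_norm ?invr_ge0 ?vnorm_ge0 // mulVf. Qed.

Lemma unit_of_ker {R : realType} {p : nat} (G : 'M[R]_p) :
  (forall z : 'cV[R]_p, G *m z = 0 -> z = 0) -> G \in unitmx.
Proof.
move=> hk; rewrite unitmxE unitfE -det_tr; apply/negP => /det0P [w wn0 wG].
have : G *m w^T = 0 by apply: trmx_inj; rewrite trmx_mul trmxK wG trmx0.
move/hk => w0.
by move: wn0; rewrite -(trmxK w) w0 trmx0 eqxx.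
Qed.

Lemma psd_of_pd {R : realType} {p : nat} (M : 'M[R]_p) :
  sym_pd M -> forall x, 0 <= quad M x.
Proof.
move=> [_ h] x; have [->|xn0] := eqVneq x 0.
  by rewrite /quad mulmx0 mxE.
exact: ltW (h x xn0).
Qed.

Lemma lmin_spec {R : realType} {p : nat} (M : 'M[R]_p) :
  (0 < p)%N -> sym_pd M ->
  0 < lambda_min M /\ forall x, lambda_min M * dot x x <= quad M x.
Proof.
move=> p0 Mpd; have [MT _] := Mpd.
set Q := [set quad M x | x in [set x : 'cV[R]_p | vnorm x = 1]].
have hQ : has_lbound Q by exists 0 => y [x _ <-]; apply: psd_of_pd.
have Qne : Q !=set0.
  set x0 : 'cV[R]_p := const_mx 1.
  have x0n : vnorm x0 != 0.
    apply/negP => /eqP /vnorm_eq0 /matrixP /(_ (Ordinal p0) 0).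
    by rewrite !mxE => /eqP; rewrite oner_eq0.
  by exists (quad M ((vnorm x0)^-1 *: x0)); exists ((vnorm x0)^-1 *: x0) => //; apply: normalize.
set mu := inf Q.
have key : forall x, mu * dot x x <= quad M x.
  move=> x; have [xz|xn0] := eqVneq (vnorm x) 0.
    by rewrite (vnorm_eq0 _ xz) dot0r mulr0 psd_of_pd.
  have xp : 0 < vnorm x by rewrite lt_def xn0 vnorm_ge0.
  have : mu <= quad M ((vnorm x)^-1 *: x).
    by apply: (ge_inf hQ); exists ((vnorm x)^-1 *: x) => //; apply: normalize.
  rewrite quadZ exprVn mulrC ler_pdivlMr ?exprn_gt0 //.
  by rewrite vnorm_sq.
set N := M - mu *: 1%:M.
have quadN : forall x, quad N x = quad M x - mu * dot x x.
  move=> x; rewrite !quadE mulmxBl -scalemxAl mul1mx dotDr dotNr dotZr //.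
have Npsd : forall x, 0 <= quad N x by move=> x; rewrite quadN subr_ge0 key.
have NT : N^T = N by rewrite /N linearB /= linearZ /= trmx1 MT.
have Nsing : N \notin unitmx.
  apply/negP => Nu.
  set C := snorm N + 1; set D := snorm (invmx N) + 1.
  have Cp : 0 < C by rewrite /C ltr_wpDl ?snorm_ge0.
  have Dp : 0 < D by rewrite /D ltr_wpDl ?snorm_ge0.
  have key2 : forall x, dot x x <= D ^+ 2 * C * quad N x.
    move=> x; set y := N *m x.
    have hx : vnorm x <= D * vnorm y.
      have -> : x = invmx N *m y by rewrite /y mulKmx.
      apply: le_trans (snorm_le _ _) _; rewrite ler_wpM2r ?vnorm_ge0 //.
      by rewrite /D lerDl.
    have hy : dot y (N *m y) <= C * dot y y.
      apply: le_trans (CS_le _ _) _.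
      rewrite -vnorm_sq expr2 mulrA [C * _]mulrC -mulrA ler_wpM2l ?vnorm_ge0 //.
      apply: le_trans (snorm_le _ _) _; rewrite ler_wpM2r ?vnorm_ge0 //.
      by rewrite /C lerDl.
    have ex : forall t, quad N (x - t *: y) = quad N x - 2 * t * dot y y + t ^+ 2 * dot y (N *m y).
      move=> t; rewrite !quadE mulmxBr -scalemxAr.
      rewrite !dotDl !dotDr !dotNl !dotNr !dotZl !dotZr.
      rewrite (dot_tr N x (N *m x)) NT -/y; ring.
    have h0 := Npsd (x - C^-1 *: y); rewrite ex in h0.
    set t := C^-1 in h0; have tC : t * C = 1 by rewrite mulVf // gt_eqF.
    have tp : 0 < t by rewrite invr_gt0.
    have h1 : dot y y <= C * quad N x.
      have a1 : t ^+ 2 * dot y (N *m y) <= t ^+ 2 * (C * dot y y).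
        by rewrite ler_wpM2l // sqr_ge0.
      have a2 : t ^+ 2 * (C * dot y y) = t * dot y y.
        by rewrite expr2 -mulrA (mulrA t C) tC mul1r.
      have a3 : 0 <= quad N x - t * dot y y by lra.
      have a4 : 0 <= C * (quad N x - t * dot y y) by apply: mulr_ge0 => //; exact: ltW.
      have a5 : C * (t * dot y y) = dot y y by rewrite mulrA (mulrC C) tC mul1r.
      lra.
    have h2 : vnorm x ^+ 2 <= (D * vnorm y) ^+ 2.
      by rewrite !expr2; apply: ler_pM; rewrite ?vnorm_ge0.
    rewrite -vnorm_sq; apply: (le_trans h2); rewrite exprMn vnorm_sq -mulrA.
    by rewrite ler_wpM2l // sqr_ge0.
  pose c := (D ^+ 2 * C)^-1.
  have cp : 0 < c by rewrite invr_gt0 mulr_gt0 // exprn_gt0.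
  have : mu + c <= mu.
    apply: (@lb_le_inf _ Q (mu + c) Qne) => y [x x1 <-].
    have dx : dot x x = 1 by rewrite -vnorm_sq x1 expr1n.
    have k2 := key2 x; rewrite dx in k2.
    have hq : c <= quad N x.
      by rewrite /c -(mulr1 (_^-1)) ler_pdivrMl ?mulr_gt0 ?exprn_gt0.
    by move: hq; rewrite quadN dx mulr1; lra.
  lra.
have [v vn0 Mv] : exists2 v : 'cV[R]_p, v != 0 & M *m v = mu *: v.
  move: Nsing; rewrite unitmxE unitfE negbK -det_tr => /det0P [w wn0 wN].
  exists w^T.
    by apply/negP => /eqP h; move: wn0; rewrite -(trmxK w) h trmx0 eqxx.
  have : N *m w^T = 0 by apply: trmx_inj; rewrite trmx_mul trmxK wN trmx0.
  by rewrite /N mulmxBl -scalemxAl mul1mx => /eqP; rewrite subr_eq0 => /eqP.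
set S := [set l : R | exists2 v : 'cV[R]_p, v != 0 & M *m v = l *: v].
have Slb : lbound S mu.
  move=> l [z zn0 Mz].
  have dz : 0 < dot z z.
    by rewrite lt_def dotxx_ge0 andbT; apply/negP => /eqP /dotxx_eq0 /eqP; apply/negP.
  have := key z; rewrite quadE Mz dotZr.
  by rewrite ler_pM2r.
have lm : lambda_min M = mu.
  apply: le_anti; apply/andP; split.
    by apply: (ge_inf (ex_intro _ mu Slb)); exists v.
  by apply: (@lb_le_inf _ S mu) => //; exists mu; exists v.
rewrite lm; split => //.
have dv : 0 < dot v v.
  by rewrite lt_def dotxx_ge0 andbT; apply/negP => /eqP /dotxx_eq0 /eqP; apply/negP.
have := Mpd.2 v vn0.
rewrite /quad -mulmxA -dotE Mv dotZr => h.
by move: h; rewrite pmulr_lgt0.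
Qed.

Lemma coercive {R : realType} {p : nat} (G : 'M[R]_p) (c : R) :
  0 < c -> (forall z, c * dot z z <= quad G z) ->
  (forall z, c * vnorm z <= vnorm (G *m z)) /\ G \in unitmx.
Proof.
move=> cp h.
have H : forall z, c * vnorm z <= vnorm (G *m z).
  move=> z; have [z0|zn0] := eqVneq (vnorm z) 0.
    by rewrite z0 mulr0 vnorm_ge0.
  have zp : 0 < vnorm z by rewrite lt_def zn0 vnorm_ge0.
  have h1 := h z; rewrite quadE in h1.
  have := le_trans h1 (CS_le _ _); rewrite -vnorm_sq expr2 mulrA.
  by rewrite [vnorm z * _]mulrC ler_pM2r.
split => //; apply: unit_of_ker => z Gz.
have := H z; rewrite Gz vnorm0 pmulr_rle0 // => hz.
by apply: vnorm_eq0; apply: le_anti; rewrite hz vnorm_ge0.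
Qed.

Lemma quadG {R : realType} {n m : nat} (B : 'M[R]_(n, m)) gamma E P z :
  quad (Gmat B gamma E P) z = quad E z + gamma * quad P (B *m z).
Proof.
rewrite /Gmat !quadE mulmxDl dotDr -scalemxAl dotZr -!mulmxA.
by rewrite (dot_tr B^T) trmxK.
Qed.

Lemma snorm_tr {R : realType} {p q : nat} (B : 'M[R]_(p, q)) v :
  vnorm (B^T *m v) <= snorm B * vnorm v.
Proof.
set w := B^T *m v.
have [w0|wn0] := eqVneq (vnorm w) 0.
  by rewrite w0 mulr_ge0 ?snorm_ge0 ?vnorm_ge0.
have wp : 0 < vnorm w by rewrite lt_def wn0 vnorm_ge0.
have h : vnorm w ^+ 2 <= snorm B * vnorm v * vnorm w.
  rewrite vnorm_sq {1}/w -(trmxK B) -dot_tr trmxK.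
  apply: le_trans (CS_le _ _) _.
  rewrite [snorm B * _]mulrC -mulrA ler_wpM2l ?vnorm_ge0 //.
  exact: snorm_le.
by move: h; rewrite expr2 ler_pM2r.
Qed.

Lemma quad_add {R : realType} {p : nat} (M N : 'M[R]_p) z :
  quad (M + N) z = quad M z + quad N z.
Proof. by rewrite !quadE mulmxDl dotDr. Qed.

Lemma vnorm_ord0 {R : realType} {p : nat} (v : 'cV[R]_p) : p = 0%N -> vnorm v = 0.
Proof.
move=> p0; rewrite /vnorm big1 ?sqrtr0 // => i _.
by have := ltn_ord i; rewrite {2}p0.
Qed.

Theorem theorem2 (R : realType) (n m : nat) (A : 'M[R]_n) (B : 'M[R]_(n, m))
  (gamma : R) (Ds Dd : 'M[R]_n) (Es Ed : 'M[R]_m) (ds dd : 'cV[R]_n)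
  (Ps Pd : 'M[R]_n) (hs hd : 'cV[R]_n) :
  0 <= gamma -> gamma <= 1 ->
  sym_psd Ds -> sym_psd Dd -> sym_pd Es -> sym_pd Ed ->
  sym_pd Ps -> riccati A B gamma Ds Es Ps ->
  sym_pd Pd -> riccati A B gamma Dd Ed Pd ->
  h_eq A B gamma Es Ps ds hs ->
  h_eq A B gamma Ed Pd dd hd ->
  snorm (Ed - Es) <= lambda_min Es / 2 ->
  let ks := offset_k B gamma Es Ps hs in
  let kd := offset_k B gamma Ed Pd hd in
  vnorm (kd - ks) <=
    (4 / lambda_min Es * vnorm ks) * snorm (Ed - Es)
  + (4 * gamma / lambda_min Es * vnorm ks * snorm B ^+ 2) * snorm (Pd - Ps)
  + (4 * gamma / lambda_min Es * snorm B) * vnorm (hd - hs).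
Proof.
move=> g0 _ _ _ Espd _ Pspd _ Pdpd _ _ _ hE; cbv zeta.
set ks := offset_k B gamma Es Ps hs; set kd := offset_k B gamma Ed Pd hd.
have [m0|mpos] := posnP m.
  rewrite !(vnorm_ord0 _ m0) !mulr0 mul0r add0r.
  have -> : lambda_min Es = 0.
    rewrite /lambda_min.
    set S := [set l : R | _].
    have -> : S = set0.
      apply/seteqP; split; last by move=> l.
      move=> l [v vn0 _].
      move: vn0; have -> : v = 0.
        by apply/matrixP => i j; have := ltn_ord i; rewrite {2}m0.
      by rewrite eqxx.
    exact: inf0.
  by rewrite invr0 !(mulr0, mul0r, addr0).
have [lp lq] := lmin_spec Es mpos Espd.
set l := lambda_min Es in lp lq hE *.
set sE := snorm (Ed - Es) in hE *.
set sP := snorm (Pd - Ps); set sB := snorm B.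
set Gs := Gmat B gamma Es Ps; set Gd := Gmat B gamma Ed Pd.
have Pq : forall (P : 'M[R]_n) z, sym_pd P -> 0 <= gamma * quad P z.
  by move=> P z hP; apply: mulr_ge0 => //; apply: psd_of_pd.
have [_ Gsu] : (forall z, l * vnorm z <= vnorm (Gs *m z)) /\ Gs \in unitmx.
  apply: coercive => // z; rewrite quadG; have := Pq Ps (B *m z) Pspd; have := lq z; lra.
have l2 : 0 < l / 2 by rewrite divr_gt0.
have [Gdb Gdu] : (forall z, l / 2 * vnorm z <= vnorm (Gd *m z)) /\ Gd \in unitmx.
  apply: coercive => // z; rewrite quadG; have := Pq Pd (B *m z) Pdpd.
  have -> : Ed = Es + (Ed - Es) by rewrite addrC subrK.
  rewrite quad_add; have := lq z.
  have h1 : `|quad (Ed - Es) z| <= sE * dot z z.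
    rewrite quadE; apply: le_trans (CS_abs _ _) _.
    rewrite -vnorm_sq expr2 mulrA [sE * _]mulrC -mulrA ler_wpM2l ?vnorm_ge0 //.
    exact: snorm_le.
  have h3 : sE * dot z z <= l / 2 * dot z z by rewrite ler_wpM2r // dotxx_ge0.
  have h5 : - (sE * dot z z) <= quad (Ed - Es) z.
    by move: h1; rewrite ler_norml => /andP[].
  move: h3; rewrite mulrAC => h3; lra.
have Gsks : Gs *m ks = - ((gamma / 2) *: (B^T *m hs)).
  by rewrite /ks /offset_k -/Gs mulmxN -scalemxAr -!mulmxA mulKVmx.
have Gdkd : Gd *m kd = - ((gamma / 2) *: (B^T *m hd)).
  by rewrite /kd /offset_k -/Gd mulmxN -scalemxAr -!mulmxA mulKVmx.
have eq : Gd *m (kd - ks) = - ((gamma / 2) *: (B^T *m (hd - hs))) - (Gd - Gs) *m ks.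
  rewrite mulmxBr Gdkd mulmxBl Gsks mulmxBr scalerBr.
  move: (B^T *m hd) (B^T *m hs) (Gd *m ks) => a b c.
  move: ((gamma / 2) *: a) ((gamma / 2) *: b) => x y.
  by rewrite opprB opprK opprD !addrA [RHS]addrC !addrA addNr add0r.
have GdGs : Gd - Gs = (Ed - Es) + gamma *: (B^T *m (Pd - Ps) *m B).
  by rewrite /Gd /Gs /Gmat opprD addrACA -scalerBr -mulmxBl -mulmxBr.
set a := vnorm ks; set vh := vnorm (hd - hs).
have v1 : vnorm ((Gd - Gs) *m ks) <= sE * a + gamma * (sB * (sP * (sB * a))).
  rewrite GdGs mulmxDl; apply: le_trans (vnormD _ _) _; apply: lerD.
    exact: snorm_le.
  rewrite -scalemxAl vnormZ ger0_norm // ler_wpM2l // -!mulmxA.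
  apply: le_trans (snorm_tr _ _) _; rewrite ler_wpM2l ?snorm_ge0 //.
  apply: le_trans (snorm_le _ _) _; rewrite ler_wpM2l ?snorm_ge0 //.
  exact: snorm_le.
have v2 : vnorm ((gamma / 2) *: (B^T *m (hd - hs))) <= gamma / 2 * (sB * vh).
  rewrite vnormZ ger0_norm ?divr_ge0 // ler_wpM2l ?divr_ge0 //.
  exact: snorm_tr.
have v3 : l / 2 * vnorm (kd - ks) <= gamma / 2 * (sB * vh) + (sE * a + gamma * (sB * (sP * (sB * a)))).
  apply: le_trans (Gdb _) _; rewrite eq.
  apply: le_trans (vnormD _ _) _; rewrite !vnormN; exact: lerD.
set t1 := a * sE; set t2 := gamma * a * sB ^+ 2 * sP; set t3 := gamma * sB * vh.
have ha : 0 <= a by apply: vnorm_ge0.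
have hvh : 0 <= vh by apply: vnorm_ge0.
have hsB : 0 <= sB by apply: snorm_ge0.
have hsP : 0 <= sP by apply: snorm_ge0.
have hsE : 0 <= sE by apply: snorm_ge0.
have t1p : 0 <= t1 by apply: mulr_ge0.
have t2p : 0 <= t2 by rewrite /t2 !mulr_ge0 // exprn_ge0.
have t3p : 0 <= t3 by rewrite /t3; apply: mulr_ge0 => //; apply: mulr_ge0.
have eX : gamma / 2 * (sB * vh) + (sE * a + gamma * (sB * (sP * (sB * a)))) = t3 / 2 + t1 + t2.
  by rewrite /t1 /t2 /t3; ring.
rewrite eX in v3.
have eR : 4 / l * a * sE + 4 * gamma / l * a * sB ^+ 2 * sP + 4 * gamma / l * sB * vh
        = l^-1 * (4 * (t1 + t2 + t3)).
  by rewrite /t1 /t2 /t3; ring.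
rewrite eR ler_pdivlMl //.
move: v3; rewrite mulrAC => v3.
lra.
Qed.
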